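(* Let $d\geq 1$, $p>1$ and $m>0$, and let $f,g$ be real trigonometric polynomials on $\mathbb{T}^d=\mathbb{R}^d/(2\pi\mathbb{Z})^d$ with $g\not\equiv 0$. For $\nu=(\nu_1,\dots,\nu_d)\in[1,2]^d$ and $\epsilon\geq 0$ consider the equation $$-\Delta_\nu u-mu+\epsilon\big(f(x)u^p+g(x)\big)=0,\qquad x\in\mathbb{T}^d,\qquad (\ast)$$ where $\Delta_\nu:=-\sum_{i=1}^d\nu_i^2\frac{\partial^2}{\partial x_i^2}$. Then for every $\delta>0$ there exists $\epsilon_0>0$, depending only on $\delta,f,g,m,p,d$, such that for every $0\leq\epsilon\leq\epsilon_0$ there is a set $\Omega=\Omega(\epsilon)\subset[1,2]^d$ with Lebesgue measure $\mathrm{mes}([1,2]^d\setminus\Omega)\leq\delta$ such that for every $\nu\in\Omega$ there exists a real-analytic function $u_\nu\in C^\omega(\mathbb{T}^d,\mathbb{R})$ solving $(\ast)$.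
   Context: The equation $(\ast)$ is obtained by rescaling from $-\Delta u-mu+\epsilon(f u^p+g)=0$ on the rectangular torus $\prod_{i=1}^d(\mathbb{R}/2\pi\beta_i\mathbb{Z})$, $\beta\in[\tfrac12,1]^d$, via $\nu=(\beta_1^{-1},\dots,\beta_d^{-1})$; so the theorem equivalently gives analytic solutions on most rectangular tori. Note the sign convention: with the stated definition of $\Delta_\nu$, the operator $-\Delta_\nu$ acts on $e^{in\cdot x}$ as multiplication by $\sum_i\nu_i^2n_i^2$ (as in the Fourier formulation $(\sum_i\nu_i^2n_i^2-m)\hat u(n)+\epsilon(\widehat{fu^p}+\hat g)(n)=0$, $n\in\mathbb{Z}^d$). *)

(* Defs.v *)
From Stdlib Require Import Reals List ZArith.
Open Scope R_scope.

(* Points of R^d are represented as nat -> R; only coordinates i < d matter. *)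
Definition pt := nat -> R.

Fixpoint sum_upto (n : nat) (F : nat -> R) : R :=
  match n with O => 0 | S n' => sum_upto n' F + F n' end.

Fixpoint prod_upto (n : nat) (F : nat -> R) : R :=
  match n with O => 1 | S n' => prod_upto n' F * F n' end.

Definition dotZ (d : nat) (k : nat -> Z) (x : pt) : R :=
  sum_upto d (fun i => IZR (k i) * x i).

Definition trig_poly (d : nat) (l : list ((nat -> Z) * R * R)) (x : pt) : R :=
  fold_right (fun c acc => let '(k, a, b) := c in
                a * cos (dotZ d k x) + b * sin (dotZ d k x) + acc) 0 l.

Definition shift (x : pt) (i : nat) (t : R) : pt :=
  fun j => if Nat.eqb j i then x j + t else x j.

Definition torus_fun (d : nat) (u : pt -> R) : Prop :=
  (forall x y, (forall i, (i < d)%nat -> x i = y i) -> u x = u y) /\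
  (forall x i, (i < d)%nat -> u (shift x i (2 * PI)) = u x).

(* Du l = iterated partial derivative  d_{l_1} d_{l_2} ... d_{l_k} u
   (all iterated partials in directions i < d exist everywhere). *)
Definition partial_family (d : nat) (u : pt -> R) (Du : list nat -> pt -> R) : Prop :=
  (forall x, Du nil x = u x) /\
  (forall l i x, (i < d)%nat ->
     derivable_pt_lim (fun t => Du l (shift x i t)) 0 (Du (i :: l) x)).

(* Real-analyticity (C^omega) via local Cauchy estimates on all derivatives:
   u is C^infty and near every point |d^alpha u| <= C |alpha|! rho^{-|alpha|}. *)
Definition real_analytic (d : nat) (u : pt -> R) : Prop :=
  exists Du, partial_family d u Du /\
  forall x0 : pt, exists r C rho : R, 0 < r /\ 0 < C /\ 0 < rho /\
    forall (l : list nat) (x : pt), Forall (fun i => (i < d)%nat) l ->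
      (forall i, (i < d)%nat -> Rabs (x i - x0 i) < r) ->
      Rabs (Du l x) <= C * INR (fact (length l)) / rho ^ (length l).

(* u solves  -Delta_nu u - m u + eps (f u^p + g) = 0, where
   -Delta_nu u = - sum_i nu_i^2 d_i^2 u  (acts as sum nu_i^2 n_i^2 on e^{in.x}). *)
Definition solves (d : nat) (nu : pt) (m eps : R) (f g : pt -> R) (p : nat)
  (u : pt -> R) : Prop :=
  exists Du, partial_family d u Du /\
  forall x : pt,
    - sum_upto d (fun i => nu i ^ 2 * Du (i :: i :: nil) x) - m * u x
    + eps * (f x * u x ^ p + g x) = 0.

Definition box_vol (d : nat) (a b : pt) : R := prod_upto d (fun i => b i - a i).

Definition outer_measure_le (d : nat) (S : pt -> Prop) (delta : R) : Prop :=
  forall eta, 0 < eta ->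
  exists a b : nat -> pt,
    (forall k i, (i < d)%nat -> a k i <= b k i) /\
    (forall x, S x -> exists k, forall i, (i < d)%nat -> a k i <= x i <= b k i) /\
    (forall N, sum_f_R0 (fun k => box_vol d (a k) (b k)) N <= delta + eta).

Definition in_cube (d : nat) (nu : pt) : Prop :=
  forall i, (i < d)%nat -> 1 <= nu i <= 2.

(* Main.v *)
From Stdlib Require Import Reals List ZArith Lra Lia Classical.
From Coquelicot Require Import Coquelicot.
Require Import Defs.
Open Scope R_scope.


Definition lsum (l : list R) : R := fold_right Rplus 0 l.
Lemma lsum_app l1 l2 : lsum (l1 ++ l2) = lsum l1 + lsum l2.
Proof. induction l1; simpl; [ring| rewrite IHl1; ring]. Qed.

Lemma sum_upto_ext n F G : (forall i, (i < n)%nat -> F i = G i) -> sum_upto n F = sum_upto n G.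
Proof. induction n; intros H; simpl; auto. rewrite IHn, H; auto. Qed.
Lemma sum_upto_plus n F G : sum_upto n (fun i => F i + G i) = sum_upto n F + sum_upto n G.
Proof. induction n; simpl; [ring|rewrite IHn; ring]. Qed.
Lemma sum_upto_scal n c F : sum_upto n (fun i => c * F i) = c * sum_upto n F.
Proof. induction n; simpl; [ring|rewrite IHn; ring]. Qed.
Lemma sum_upto_le n F G : (forall i, (i < n)%nat -> F i <= G i) -> sum_upto n F <= sum_upto n G.
Proof. induction n; intros H; simpl; [lra|]. apply Rplus_le_compat; auto. Qed.
Lemma sum_upto_nonneg n F : (forall i, (i < n)%nat -> 0 <= F i) -> 0 <= sum_upto n F.
Proof. intros H. replace 0 with (sum_upto n (fun _ => 0)). apply sum_upto_le; auto.
 induction n; simpl; auto. rewrite IHn; auto; ring. Qed.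
Lemma sum_upto_single_le n F i : (i < n)%nat -> (forall j, (j < n)%nat -> 0 <= F j) -> F i <= sum_upto n F.
Proof. induction n; intros Hi H; [lia|]. simpl. destruct (Nat.eq_dec i n).
 subst. assert (0 <= sum_upto n F) by (apply sum_upto_nonneg; auto). lra.
 assert (F i <= sum_upto n F) by (apply IHn; auto; lia). assert (0 <= F n) by auto. lra. Qed.

Definition kadd (k k' : nat -> Z) : nat -> Z := fun i => (k i + k' i)%Z.
Definition kneg (k : nat -> Z) : nat -> Z := fun i => (- k i)%Z.
Definition k0 : nat -> Z := fun _ => 0%Z.

Lemma dotZ_add d k k' x : dotZ d (kadd k k') x = dotZ d k x + dotZ d k' x.
Proof. unfold dotZ, kadd. induction d; simpl; [ring|]. rewrite IHd, plus_IZR; ring. Qed.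
Lemma dotZ_neg d k x : dotZ d (kneg k) x = - dotZ d k x.
Proof. unfold dotZ, kneg. induction d; simpl; [ring|]. rewrite IHd, opp_IZR; ring. Qed.
Lemma dotZ_k0 d x : dotZ d k0 x = 0.
Proof. unfold dotZ, k0. induction d; simpl; [ring|]. rewrite IHd; ring. Qed.
Lemma dotZ_shift d k x i t : (i < d)%nat -> dotZ d k (shift x i t) = dotZ d k x + IZR (k i) * t.
Proof. unfold dotZ, shift. induction d; intros Hi; [lia|]. simpl.
 destruct (Nat.eq_dec i d).
 - subst. rewrite Nat.eqb_refl.
   rewrite (sum_upto_ext d _ (fun i0 => IZR (k i0) * x i0)). ring.
   intros j Hj. destruct (Nat.eqb_spec j d); [lia|auto].
 - rewrite IHd by lia. destruct (Nat.eqb_spec d i); [lia|]. ring. Qed.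
Lemma dotZ_ext d k x y : (forall i, (i < d)%nat -> x i = y i) -> dotZ d k x = dotZ d k y.
Proof. intros H. unfold dotZ. apply sum_upto_ext. intros i Hi; rewrite H; auto. Qed.

Definition term := ((nat -> Z) * R * R)%type.
Definition tR d (x : pt) (t : term) : R :=
  let '(k,a,b) := t in a * cos (dotZ d k x) - b * sin (dotZ d k x).
Definition tI d (x : pt) (t : term) : R :=
  let '(k,a,b) := t in a * sin (dotZ d k x) + b * cos (dotZ d k x).
Definition eR d (A : list term) x := lsum (map (tR d x) A).
Definition eI d (A : list term) x := lsum (map (tI d x) A).

Lemma eR_app d A B x : eR d (A ++ B) x = eR d A x + eR d B x.
Proof. unfold eR. rewrite map_app, lsum_app. auto. Qed.
Lemma eI_app d A B x : eI d (A ++ B) x = eI d A x + eI d B x.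
Proof. unfold eI. rewrite map_app, lsum_app. auto. Qed.
Lemma eR_cons d t A x : eR d (t :: A) x = tR d x t + eR d A x.
Proof. reflexivity. Qed.
Lemma eI_cons d t A x : eI d (t :: A) x = tI d x t + eI d A x.
Proof. reflexivity. Qed.

Definition tmul (s t : term) : term :=
  let '(k,a,b) := s in let '(k',a',b') := t in (kadd k k', a*a' - b*b', a*b' + b*a').
Definition mul (A B : list term) : list term := flat_map (fun s => map (tmul s) B) A.

Lemma tR_tmul d x s t : tR d x (tmul s t) = tR d x s * tR d x t - tI d x s * tI d x t.
Proof. destruct s as [[k a] b], t as [[k' a'] b']. simpl. rewrite dotZ_add, cos_plus, sin_plus. ring. Qed.
Lemma tI_tmul d x s t : tI d x (tmul s t) = tR d x s * tI d x t + tI d x s * tR d x t.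
Proof. destruct s as [[k a] b], t as [[k' a'] b']. simpl. rewrite dotZ_add, cos_plus, sin_plus. ring. Qed.

Lemma eRI_map_tmul d x s B :
  eR d (map (tmul s) B) x = tR d x s * eR d B x - tI d x s * eI d B x /\
  eI d (map (tmul s) B) x = tR d x s * eI d B x + tI d x s * eR d B x.
Proof. induction B as [|t B IH]; simpl. unfold eR, eI; simpl; split; ring.
 destruct IH as [H1 H2]. rewrite !eR_cons, !eI_cons, H1, H2, tR_tmul, tI_tmul. split; ring. Qed.

Lemma eRI_mul d x A B :
  eR d (mul A B) x = eR d A x * eR d B x - eI d A x * eI d B x /\
  eI d (mul A B) x = eR d A x * eI d B x + eI d A x * eR d B x.
Proof. induction A as [|s A IH]; simpl. unfold eR, eI; simpl; split; ring.
 destruct IH as [H1 H2]. change (mul (s::A) B) with (map (tmul s) B ++ mul A B).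
 rewrite eR_app, eI_app, H1, H2, !eR_cons, !eI_cons.
 destruct (eRI_map_tmul d x s B) as [H3 H4]. rewrite H3, H4. split; ring. Qed.
Lemma eR_mul d x A B : eR d (mul A B) x = eR d A x * eR d B x - eI d A x * eI d B x.
Proof. apply eRI_mul. Qed.
Lemma eI_mul d x A B : eI d (mul A B) x = eR d A x * eI d B x + eI d A x * eR d B x.
Proof. apply eRI_mul. Qed.

Definition one : list term := (k0, 1, 0) :: nil.
Lemma eR_one d x : eR d one x = 1.
Proof. unfold eR, one; simpl. rewrite dotZ_k0, cos_0, sin_0. ring. Qed.
Lemma eI_one d x : eI d one x = 0.
Proof. unfold eI, one; simpl. rewrite dotZ_k0, cos_0, sin_0. ring. Qed.

Fixpoint pw (A : list term) (n : nat) : list term :=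
  match n with O => one | S n => mul A (pw A n) end.

Definition scal (r : R) (A : list term) : list term :=
  map (fun t => let '(k,a,b) := t in (k, r*a, r*b)) A.
Lemma eR_scal d r A x : eR d (scal r A) x = r * eR d A x.
Proof. induction A as [|[[k a] b] A IH]; unfold eR in *; simpl; [ring|]. rewrite IH; ring. Qed.
Lemma eI_scal d r A x : eI d (scal r A) x = r * eI d A x.
Proof. induction A as [|[[k a] b] A IH]; unfold eI in *; simpl; [ring|]. rewrite IH; ring. Qed.

Definition Rf (A : list term) : list term :=
  map (fun t => let '(k,a,b) := t in (kneg k, a, -b)) A.
Lemma eR_Rf d A x : eR d (Rf A) x = eR d A x.
Proof. induction A as [|[[k a] b] A IH]; unfold eR in *; simpl; [ring|]. rewrite IH, dotZ_neg, cos_neg, sin_neg; ring. Qed.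
Lemma eI_Rf d A x : eI d (Rf A) x = - eI d A x.
Proof. induction A as [|[[k a] b] A IH]; unfold eI in *; simpl; [ring|]. rewrite IH, dotZ_neg, cos_neg, sin_neg; ring. Qed.

Definition Sym (A : list term) : list term := scal (1/2) (A ++ Rf A).
Lemma eR_Sym d A x : eR d (Sym A) x = eR d A x.
Proof. unfold Sym. rewrite eR_scal, eR_app, eR_Rf. field. Qed.
Lemma eI_Sym d A x : eI d (Sym A) x = 0.
Proof. unfold Sym. rewrite eI_scal, eI_app, eI_Rf. field. Qed.

Definition cv (l : list ((nat -> Z) * R * R)) : list term :=
  map (fun t => let '(k,a,b) := t in (k, a, -b)) l.
Lemma eR_cv d l x : eR d (cv l) x = trig_poly d l x.
Proof. induction l as [|[[k a] b] l IH]; unfold eR in *; simpl; [ring|]. rewrite IH; ring. Qed.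


Definition kn d (k : nat -> Z) := sum_upto d (fun i => Rabs (IZR (k i))).
Lemma kn_nonneg d k : 0 <= kn d k.
Proof. apply sum_upto_nonneg. intros; apply Rabs_pos. Qed.
Lemma kn_add d k k' : kn d (kadd k k') <= kn d k + kn d k'.
Proof. unfold kn. rewrite <- sum_upto_plus. apply sum_upto_le. intros i _.
 unfold kadd. rewrite plus_IZR. apply Rabs_triang. Qed.
Lemma kn_neg d k : kn d (kneg k) = kn d k.
Proof. unfold kn. apply sum_upto_ext. intros i _. unfold kneg. rewrite opp_IZR, Rabs_Ropp. auto. Qed.
Lemma kn_k0 d : kn d k0 = 0.
Proof. unfold kn, k0. induction d; simpl; auto. rewrite IHd, Rabs_R0. ring. Qed.
Lemma kn_ge d k i : (i < d)%nat -> Rabs (IZR (k i)) <= kn d k.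
Proof. intros Hi. unfold kn. apply (sum_upto_single_le d (fun i => Rabs (IZR (k i)))); auto.
 intros; apply Rabs_pos. Qed.

Definition tn d (t : term) : R := let '(k,a,b) := t in (Rabs a + Rabs b) * exp (kn d k).
Definition tn0 (t : term) : R := let '(k,a,b) := t in Rabs a + Rabs b.
Definition nrm d A := lsum (map (tn d) A).
Definition nrm0 A := lsum (map tn0 A).

Lemma tn_nonneg d t : 0 <= tn d t.
Proof. destruct t as [[k a] b]; simpl. apply Rmult_le_pos. pose proof (Rabs_pos a); pose proof (Rabs_pos b); lra.
 left; apply exp_pos. Qed.
Lemma nrm_app d A B : nrm d (A ++ B) = nrm d A + nrm d B.
Proof. unfold nrm. rewrite map_app, lsum_app; auto. Qed.
Lemma nrm_cons d t A : nrm d (t :: A) = tn d t + nrm d A.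
Proof. reflexivity. Qed.
Lemma nrm_nonneg d A : 0 <= nrm d A.
Proof. induction A; [unfold nrm; simpl; lra|]. rewrite nrm_cons. pose proof (tn_nonneg d a). lra. Qed.

Lemma cmul_abs a b a' b' : Rabs (a*a' - b*b') + Rabs (a*b' + b*a') <= (Rabs a + Rabs b) * (Rabs a' + Rabs b').
Proof. pose proof (Rabs_triang (a*a') (-(b*b'))). pose proof (Rabs_triang (a*b') (b*a')).
 rewrite Rabs_Ropp in H. rewrite !Rabs_mult in H, H0. unfold Rminus. nra. Qed.

Lemma tn_tmul d s t : tn d (tmul s t) <= tn d s * tn d t.
Proof. destruct s as [[k a] b], t as [[k' a'] b']. simpl.
 pose proof (cmul_abs a b a' b').
 assert (exp (kn d (kadd k k')) <= exp (kn d k) * exp (kn d k')).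
 { rewrite <- exp_plus. destruct (Req_dec (kn d (kadd k k')) (kn d k + kn d k')) as [E|E]. rewrite E; lra.
   left; apply exp_increasing. pose proof (kn_add d k k'). lra. }
 pose proof (exp_pos (kn d (kadd k k'))). pose proof (exp_pos (kn d k)). pose proof (exp_pos (kn d k')).
 pose proof (Rabs_pos (a*a' - b*b')). pose proof (Rabs_pos (a*b'+b*a')).
 pose proof (Rabs_pos a). pose proof (Rabs_pos b). pose proof (Rabs_pos a'). pose proof (Rabs_pos b').
 apply Rle_trans with ((Rabs a + Rabs b) * (Rabs a' + Rabs b') * exp (kn d (kadd k k'))).
 apply Rmult_le_compat_r; lra.
 replace ((Rabs a + Rabs b) * exp (kn d k) * ((Rabs a' + Rabs b') * exp (kn d k'))) with
   ((Rabs a + Rabs b) * (Rabs a' + Rabs b') * (exp (kn d k) * exp (kn d k'))) by ring.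
 apply Rmult_le_compat_l; auto. apply Rmult_le_pos; lra. Qed.

Lemma nrm_mul d A B : nrm d (mul A B) <= nrm d A * nrm d B.
Proof. induction A as [|s A IH]. unfold nrm; simpl; lra.
 change (mul (s::A) B) with (map (tmul s) B ++ mul A B). rewrite nrm_app, nrm_cons.
 assert (nrm d (map (tmul s) B) <= tn d s * nrm d B).
 { clear IH. induction B as [|t B IHB]. unfold nrm; simpl; lra. simpl. rewrite !nrm_cons.
   rewrite Rmult_plus_distr_l. apply Rplus_le_compat. apply tn_tmul. exact IHB. }
 pose proof (nrm_nonneg d B). rewrite Rmult_plus_distr_r. apply Rplus_le_compat; auto. Qed.

Lemma nrm_one d : nrm d one = 1.
Proof. unfold nrm, one; simpl. rewrite kn_k0, exp_0, Rabs_R1, Rabs_R0. ring. Qed.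

Lemma nrm_pw d A n : nrm d (pw A n) <= nrm d A ^ n.
Proof. induction n; simpl. rewrite nrm_one; lra.
 pose proof (nrm_mul d A (pw A n)). pose proof (nrm_nonneg d A). nra. Qed.

Lemma nrm_scal d r A : nrm d (scal r A) = Rabs r * nrm d A.
Proof. induction A as [|[[k a] b] A IH]; unfold nrm in *; simpl; [ring|]. rewrite IH, !Rabs_mult; ring. Qed.
Lemma nrm_Rf d A : nrm d (Rf A) = nrm d A.
Proof. induction A as [|[[k a] b] A IH]; unfold nrm in *; simpl; [ring|]. rewrite IH, kn_neg, Rabs_Ropp; ring. Qed.
Lemma nrm_Sym d A : nrm d (Sym A) = nrm d A.
Proof. unfold Sym. rewrite nrm_scal, nrm_app, nrm_Rf. rewrite Rabs_right by lra. field. Qed.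

Definition lam d (nu : pt) (k : nat -> Z) := sum_upto d (fun i => nu i ^ 2 * IZR (k i) ^ 2).
Definition Lop d nu m (A : list term) : list term :=
  map (fun t => let '(k,a,b) := t in (k, (lam d nu k - m) * a, (lam d nu k - m) * b)) A.
Definition Linv d nu m (A : list term) : list term :=
  map (fun t => let '(k,a,b) := t in (k, a / (lam d nu k - m), b / (lam d nu k - m))) A.
Lemma lam_neg d nu k : lam d nu (kneg k) = lam d nu k.
Proof. unfold lam. apply sum_upto_ext. intros; unfold kneg; rewrite opp_IZR; ring. Qed.

Lemma Lop_app d nu m A B : Lop d nu m (A ++ B) = Lop d nu m A ++ Lop d nu m B.
Proof. apply map_app. Qed.
Lemma Lop_Linv d nu m A : (forall k, lam d nu k - m <> 0) -> Lop d nu m (Linv d nu m A) = A.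
Proof. intros H. induction A as [|[[k a] b] A IH]; simpl; auto. rewrite IH. f_equal. apply f_equal2; [apply f_equal2; [reflexivity| field; auto] | field; auto]. Qed.
Lemma Lop_scal d nu m r A : Lop d nu m (scal r A) = scal r (Lop d nu m A).
Proof. induction A as [|[[k a] b] A IH]; simpl; auto. rewrite IH. f_equal. apply f_equal2; [apply f_equal2; [reflexivity| ring] | ring]. Qed.
Lemma Lop_Rf d nu m A : Lop d nu m (Rf A) = Rf (Lop d nu m A).
Proof. induction A as [|[[k a] b] A IH]; simpl; auto. rewrite IH, lam_neg. f_equal. apply f_equal2; [apply f_equal2; [reflexivity| ring] | ring]. Qed.
Lemma Lop_Sym d nu m A : Lop d nu m (Sym A) = Sym (Lop d nu m A).
Proof. unfold Sym. rewrite Lop_scal, Lop_app, Lop_Rf. auto. Qed.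

Lemma nrm_Linv d nu m A g : 0 < g -> (forall k, g <= Rabs (lam d nu k - m)) ->
  nrm d (Linv d nu m A) <= nrm d A / g.
Proof. intros Hg H. induction A as [|[[k a] b] A IH]. unfold nrm; simpl. unfold Rdiv; lra.
 change (Linv d nu m ((k,a,b)::A)) with ((k, a / (lam d nu k - m), b / (lam d nu k - m)) :: Linv d nu m A).
 rewrite !nrm_cons. unfold Rdiv in *. rewrite Rmult_plus_distr_r. apply Rplus_le_compat; auto.
 specialize (H k). assert (Hl : 0 < Rabs (lam d nu k - m)) by lra.
 unfold tn. rewrite !Rabs_mult, !Rabs_inv.
 replace ((Rabs a * / Rabs (lam d nu k - m) + Rabs b * / Rabs (lam d nu k - m)) * exp (kn d k))
   with (((Rabs a + Rabs b) * exp (kn d k)) * / Rabs (lam d nu k - m)) by ring.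
 apply Rmult_le_compat_l. apply Rmult_le_pos. pose proof (Rabs_pos a); pose proof (Rabs_pos b); lra.
 left; apply exp_pos. apply Rinv_le_contravar; lra. Qed.

Definition tD d i (t : term) : term :=
  let '(k,a,b) := t in if Nat.ltb i d then (k, - IZR (k i) * b, IZR (k i) * a) else (k, 0, 0).
Definition Dop d i (A : list term) : list term := map (tD d i) A.
Definition Dl d (l : list nat) (A : list term) : list term := fold_right (Dop d) A l.
Definition tDl d (l : list nat) (t : term) : term := fold_right (tD d) t l.
Lemma Dl_map d l A : Dl d l A = map (tDl d l) A.
Proof. induction l; simpl. rewrite map_id; auto. rewrite IHl. unfold Dop. rewrite map_map. auto. Qed.

Lemma tDl_bound d l t : fst (fst (tDl d l t)) = fst (fst t) /\
   tn0 (tDl d l t) <= kn d (fst (fst t)) ^ length l * tn0 t.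
Proof. induction l; simpl. split; auto. destruct t as [[k a] b]; simpl; lra.
 destruct IHl as [H1 H2]. destruct (tDl d l t) as [[k' a'] b'] eqn:E. simpl in *.
 destruct (Nat.ltb_spec a d); simpl; split; auto.
 - rewrite !Rabs_mult, Rabs_Ropp. subst k'.
   pose proof (kn_ge d (fst (fst t)) a H). pose proof (Rabs_pos a'). pose proof (Rabs_pos b').
   pose proof (Rabs_pos (IZR (fst (fst t) a))).
   apply Rle_trans with (kn d (fst (fst t)) * (Rabs a' + Rabs b')). nra.
   rewrite Rmult_assoc. apply Rmult_le_compat_l. apply kn_nonneg. auto.
 - assert (0 <= tn0 t) by (destruct t as [[k a0] b0]; unfold tn0;
   pose proof (Rabs_pos a0); pose proof (Rabs_pos b0); lra).
   pose proof (pow_le _ (S (length l)) (kn_nonneg d (fst (fst t)))).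
   rewrite Rabs_R0. change (0 + 0 <= kn d (fst (fst t)) ^ S (length l) * tn0 t).
   rewrite Rplus_0_l. apply Rmult_le_pos; auto. Qed.

Lemma pow_fact_exp n : forall y, 0 <= y -> y ^ n <= INR (fact n) * exp y.
Proof. induction n; intros y Hy. simpl. pose proof (exp_ineq1_le y). lra.
 set (h := fun y => INR (fact (S n)) * exp y - y ^ S n).
 assert (Hd : forall c, derivable_pt_lim h c (INR (fact (S n)) * exp c - INR (S n) * c ^ n)).
 { intros c. unfold h. apply derivable_pt_lim_minus.
   apply derivable_pt_lim_scal. apply derivable_pt_lim_exp.
   replace n with (Nat.pred (S n)) at 2 by auto. apply derivable_pt_lim_pow. }
 destruct (Req_dec y 0) as [E|E]. subst. simpl. rewrite exp_0. rewrite Rmult_0_l, Rmult_1_r.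
 apply pos_INR.
 destruct (MVT_cor2 h (fun c => INR (fact (S n)) * exp c - INR (S n) * c ^ n) 0 y) as [c [Hc1 Hc2]].
 lra. intros; apply Hd.
 assert (0 <= INR (fact (S n)) * exp c - INR (S n) * c ^ n).
 { change (fact (S n)) with ((S n) * fact n)%nat. rewrite mult_INR.
   pose proof (IHn c ltac:(lra)). pose proof (pos_INR (S n)). nra. }
 assert (h 0 = INR (fact (S n))). { unfold h. simpl. rewrite exp_0. ring. }
 assert (0 <= h y). { pose proof (pos_INR (fact (S n))). nra. }
 unfold h in H1. lra. Qed.

Lemma abs_tR d x t : Rabs (tR d x t) <= tn0 t.
Proof. destruct t as [[k a] b]; simpl. unfold Rminus.
 eapply Rle_trans. apply Rabs_triang. rewrite Rabs_Ropp, !Rabs_mult.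
 pose proof (COS_bound (dotZ d k x)). pose proof (SIN_bound (dotZ d k x)).
 assert (Rabs (cos (dotZ d k x)) <= 1) by (apply Rabs_le; lra).
 assert (Rabs (sin (dotZ d k x)) <= 1) by (apply Rabs_le; lra).
 pose proof (Rabs_pos a). pose proof (Rabs_pos b). pose proof (Rabs_pos (cos (dotZ d k x))).
 pose proof (Rabs_pos (sin (dotZ d k x))). nra. Qed.

Lemma abs_eR d x A : Rabs (eR d A x) <= nrm0 A.
Proof. induction A. unfold eR, nrm0; simpl. rewrite Rabs_R0; lra.
 rewrite eR_cons. unfold nrm0; simpl. fold (nrm0 A). eapply Rle_trans. apply Rabs_triang.
 pose proof (abs_tR d x a). lra. Qed.

Lemma abs_eR_Dl d x l A : Rabs (eR d (Dl d l A) x) <= INR (fact (length l)) * nrm d A.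
Proof. eapply Rle_trans. apply abs_eR. rewrite Dl_map. induction A as [|t A IH].
 unfold nrm0, nrm; simpl; lra. simpl. unfold nrm0 in *; simpl. fold (nrm0 (map (tDl d l) A)) in *.
 rewrite nrm_cons, Rmult_plus_distr_l. apply Rplus_le_compat; auto.
 destruct (tDl_bound d l t) as [_ H]. eapply Rle_trans. apply H.
 destruct t as [[k a] b]; simpl.
 pose proof (pow_fact_exp (length l) (kn d k) (kn_nonneg d k)).
 pose proof (Rabs_pos a); pose proof (Rabs_pos b). nra. Qed.

Lemma is_derive_eR d x i A t0 : (i < d)%nat ->
  is_derive (fun t => eR d A (shift x i t)) t0 (eR d (Dop d i A) (shift x i t0)).
Proof. intros Hi. induction A as [|[[k a] b] A IH].
 - apply (is_derive_ext (fun _ => 0)). intros; reflexivity.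
   change (eR d (Dop d i nil) (shift x i t0)) with 0. apply (is_derive_const 0).
 - change (Dop d i ((k,a,b)::A)) with (tD d i (k,a,b) :: Dop d i A). rewrite eR_cons.
   apply (is_derive_ext (fun t => tR d (shift x i t) (k,a,b) + eR d A (shift x i t))).
   { intros; rewrite eR_cons; auto. }
   apply (is_derive_plus (fun t => tR d (shift x i t) (k,a,b))); auto.
   apply (is_derive_ext (fun t => a * cos (dotZ d k x + IZR (k i) * t) - b * sin (dotZ d k x + IZR (k i) * t))).
   { intros; unfold tR; rewrite dotZ_shift; auto. }
   assert (Hl : Nat.ltb i d = true) by (apply Nat.ltb_lt; auto). unfold tD. rewrite Hl. unfold tR.
   rewrite dotZ_shift by auto.
   auto_derive; auto. ring. Qed.

Lemma eR_Lop d nu m A x : eR d (Lop d nu m A) x =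
  - sum_upto d (fun i => nu i ^ 2 * eR d (Dop d i (Dop d i A)) x) - m * eR d A x.
Proof. induction A as [|[[k a] b] A IH].
 - unfold eR; simpl. rewrite (sum_upto_ext d _ (fun _ => 0 * 0)). rewrite sum_upto_scal. ring.
   intros; ring.
 - change (Lop d nu m ((k,a,b)::A)) with ((k, (lam d nu k - m) * a, (lam d nu k - m) * b) :: Lop d nu m A).
   rewrite !eR_cons.
   rewrite (sum_upto_ext d _ (fun i => nu i ^ 2 * tR d x (tD d i (tD d i (k,a,b))) +
        nu i ^ 2 * eR d (Dop d i (Dop d i A)) x)).
   2:{ intros i Hi. unfold Dop. cbn [map]. rewrite eR_cons; ring. }
   rewrite IH.
   rewrite sum_upto_plus.
   rewrite (sum_upto_ext d (fun i => nu i ^ 2 * tR d x (tD d i (tD d i (k, a, b))))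
      (fun i => - (a * cos (dotZ d k x) - b * sin (dotZ d k x)) * (nu i ^ 2 * IZR (k i) ^ 2))).
   2:{ intros i Hi. assert (Hl : Nat.ltb i d = true) by (apply Nat.ltb_lt; auto). unfold tD. rewrite Hl. unfold tR. ring. }
   rewrite sum_upto_scal. unfold lam, tR. ring. Qed.

Lemma eR_ext d A x y : (forall i, (i < d)%nat -> x i = y i) -> eR d A x = eR d A y.
Proof. intros H. induction A as [|[[k a] b] A IH]; auto. rewrite !eR_cons, IH. simpl. rewrite (dotZ_ext d k x y H). auto. Qed.

Lemma cos_Zper th z : cos (th + IZR z * (2 * PI)) = cos th.
Proof. destruct z as [|q|q]; simpl. rewrite Rmult_0_l, Rplus_0_r; auto.
 rewrite <- positive_nat_Z, <- INR_IZR_INZ. replace (INR (Pos.to_nat q) * (2 * PI)) with (2 * INR (Pos.to_nat q) * PI) by ring. apply cos_period.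
 replace (IZR (Z.neg q)) with (- INR (Pos.to_nat q)). rewrite <- (cos_period (th + - INR (Pos.to_nat q) * (2 * PI)) (Pos.to_nat q)). f_equal; ring.
 rewrite <- Pos2Z.opp_pos, opp_IZR, <- positive_nat_Z, <- INR_IZR_INZ. auto. Qed.
Lemma sin_Zper th z : sin (th + IZR z * (2 * PI)) = sin th.
Proof. destruct z as [|q|q]; simpl. rewrite Rmult_0_l, Rplus_0_r; auto.
 rewrite <- positive_nat_Z, <- INR_IZR_INZ. replace (INR (Pos.to_nat q) * (2 * PI)) with (2 * INR (Pos.to_nat q) * PI) by ring. apply sin_period.
 replace (IZR (Z.neg q)) with (- INR (Pos.to_nat q)). rewrite <- (sin_period (th + - INR (Pos.to_nat q) * (2 * PI)) (Pos.to_nat q)). f_equal; ring.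
 rewrite <- Pos2Z.opp_pos, opp_IZR, <- positive_nat_Z, <- INR_IZR_INZ. auto. Qed.

Lemma eR_per d A x i : (i < d)%nat -> eR d A (shift x i (2 * PI)) = eR d A x.
Proof. intros Hi. induction A as [|[[k a] b] A IH]; auto. rewrite !eR_cons, IH. simpl.
 rewrite dotZ_shift by auto. rewrite cos_Zper, sin_Zper. auto. Qed.


Fixpoint Qf (A B : list term) (n : nat) : list term :=
  match n with O => nil | S n => pw A n ++ mul B (Qf A B n) end.

Fixpoint qf (a b : R) (n : nat) : R := match n with O => 0 | S n => a ^ n + b * qf a b n end.
Lemma qf_id a b n : (a - b) * qf a b n = a ^ n - b ^ n.
Proof. induction n; simpl. ring. replace ((a - b) * (a ^ n + b * qf a b n)) with ((a-b)*a^n + b * ((a - b) * qf a b n)) by ring.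
 rewrite IHn. ring. Qed.

Lemma eRI_pw d x A n : eI d A x = 0 -> eR d (pw A n) x = eR d A x ^ n /\ eI d (pw A n) x = 0.
Proof. intros H. induction n; simpl. split; [apply eR_one|apply eI_one].
 destruct IHn as [H1 H2]. rewrite eR_mul, eI_mul, H1, H2, H. split; ring. Qed.

Lemma eRI_Qf d x A B n : eI d A x = 0 -> eI d B x = 0 ->
  eR d (Qf A B n) x = qf (eR d A x) (eR d B x) n /\ eI d (Qf A B n) x = 0.
Proof. intros HA HB. induction n; simpl. unfold eR, eI; simpl; split; auto.
 destruct IHn as [H1 H2]. destruct (eRI_pw d x A n HA) as [H3 H4].
 rewrite eR_app, eI_app, eR_mul, eI_mul, H1, H2, H3, H4, HB. split; ring. Qed.

Lemma pow_le1 x n : 0 <= x <= 1 -> x ^ n <= 1.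
Proof. intros H. induction n; simpl. lra. pose proof (pow_le x n ltac:(lra)). nra. Qed.

Lemma nrm_Qf d A B n : nrm d A <= 1 -> nrm d B <= 1 -> nrm d (Qf A B n) <= INR n.
Proof. intros HA HB. induction n. unfold nrm; simpl; lra.
 change (Qf A B (S n)) with (pw A n ++ mul B (Qf A B n)). rewrite nrm_app, S_INR.
 pose proof (nrm_pw d A n). pose proof (nrm_mul d B (Qf A B n)).
 pose proof (nrm_nonneg d A). pose proof (nrm_nonneg d B). pose proof (nrm_nonneg d (Qf A B n)).
 assert (nrm d A ^ n <= 1) by (apply pow_le1; split; [apply nrm_nonneg|lra]). pose proof (pos_INR n). nra. Qed.

Definition stepf d nu m eps p (F : list term) (UW : list term * list term) :=
  let (U, W) := UW in
  (U ++ W, Sym (scal (- eps) (Linv d nu m (mul F (mul W (Qf (U ++ W) U p)))))).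
Fixpoint itf d nu m eps p F G (n : nat) : list term * list term :=
  match n with
  | O => (nil, Sym (scal (- eps) (Linv d nu m G)))
  | S n => stepf d nu m eps p F (itf d nu m eps p F G n)
  end.
Definition Uf d nu m eps p F G n := fst (itf d nu m eps p F G n).
Definition Wf d nu m eps p F G n := snd (itf d nu m eps p F G n).

Lemma Uf_S d nu m eps p F G n : Uf d nu m eps p F G (S n) = Uf d nu m eps p F G n ++ Wf d nu m eps p F G n.
Proof. unfold Uf, Wf. simpl. destruct (itf d nu m eps p F G n). auto. Qed.
Lemma Wf_S d nu m eps p F G n : Wf d nu m eps p F G (S n) =
  Sym (scal (- eps) (Linv d nu m (mul F (mul (Wf d nu m eps p F G n)
     (Qf (Uf d nu m eps p F G (S n)) (Uf d nu m eps p F G n) p))))).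
Proof. rewrite Uf_S. unfold Uf, Wf. simpl. destruct (itf d nu m eps p F G n). auto. Qed.
Lemma Wf_0 d nu m eps p F G : Wf d nu m eps p F G 0 = Sym (scal (- eps) (Linv d nu m G)).
Proof. reflexivity. Qed.
Lemma Uf_0 d nu m eps p F G : Uf d nu m eps p F G 0 = nil.
Proof. reflexivity. Qed.

Lemma eI_Wf d nu m eps p F G n x : eI d (Wf d nu m eps p F G n) x = 0.
Proof. destruct n. rewrite Wf_0. apply eI_Sym. rewrite Wf_S. apply eI_Sym. Qed.
Lemma eI_Uf d nu m eps p F G n x : eI d (Uf d nu m eps p F G n) x = 0.
Proof. induction n. reflexivity. rewrite Uf_S, eI_app, IHn, eI_Wf. ring. Qed.

Lemma eR_Uf d nu m eps p F G n x :
  eR d (Uf d nu m eps p F G (S n)) x = sum_n (fun j => eR d (Wf d nu m eps p F G j) x) n.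
Proof. induction n. rewrite sum_O, Uf_S, Uf_0. reflexivity.
 rewrite sum_Sn, Uf_S, eR_app, IHn. reflexivity. Qed.

Lemma eR_Lop_Uf d nu m eps p F G x : (1 <= p)%nat -> (forall k, lam d nu k - m <> 0) ->
  forall n, eR d (Lop d nu m (Uf d nu m eps p F G (S n))) x =
    - eps * (eR d G x + eR d F x * eR d (Uf d nu m eps p F G n) x ^ p).
Proof. intros Hp Hnr. induction n.
 - rewrite Uf_S, Uf_0, Wf_0. simpl app. rewrite Lop_Sym, Lop_scal, Lop_Linv by auto.
   rewrite eR_Sym, eR_scal. change (eR d nil x) with 0. rewrite pow_i by lia. ring.
 - rewrite (Uf_S _ _ _ _ _ _ _ (S n)), Lop_app, eR_app, IHn, Wf_S.
   rewrite Lop_Sym, Lop_scal, Lop_Linv by auto. rewrite eR_Sym, eR_scal.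
   set (W := Wf d nu m eps p F G n). set (U1 := Uf d nu m eps p F G (S n)). set (U0 := Uf d nu m eps p F G n).
   destruct (eRI_Qf d x U1 U0 p (eI_Uf _ _ _ _ _ _ _ _ x) (eI_Uf _ _ _ _ _ _ _ _ x)) as [H1 H2].
   assert (HI : eI d W x = 0) by apply eI_Wf.
   rewrite eR_mul, eR_mul, eI_mul, H1, H2, HI.
   assert (HW : eR d W x = eR d U1 x - eR d U0 x). { unfold U1, W, U0. rewrite Uf_S, eR_app. ring. }
   rewrite HW. pose proof (qf_id (eR d U1 x) (eR d U0 x) p). 
   replace (eR d F x * ((eR d U1 x - eR d U0 x) * qf (eR d U1 x) (eR d U0 x) p) -
      eI d F x * ((eR d U1 x - eR d U0 x) * 0 + 0 * qf (eR d U1 x) (eR d U0 x) p))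
    with (eR d F x * ((eR d U1 x - eR d U0 x) * qf (eR d U1 x) (eR d U0 x) p)) by ring.
   rewrite H. ring. Qed.

Lemma nrm_iter d nu m eps p F G gam : 0 < gam -> (forall k, gam <= Rabs (lam d nu k - m)) ->
  Rabs eps * nrm d G / gam <= 1/2 -> Rabs eps * nrm d F * INR p / gam <= 1/2 ->
  forall n, nrm d (Wf d nu m eps p F G n) <= (1/2) ^ (S n) /\ nrm d (Uf d nu m eps p F G n) <= 1 - (1/2) ^ n.
Proof. intros Hg Hnr HG HF. induction n.
 - rewrite Wf_0, Uf_0, nrm_Sym, nrm_scal, Rabs_Ropp. split; [|unfold nrm; simpl; lra].
   pose proof (nrm_Linv d nu m G gam Hg Hnr). pose proof (Rabs_pos eps).
   apply Rle_trans with (Rabs eps * (nrm d G / gam)). apply Rmult_le_compat_l; auto.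
   unfold Rdiv in *. simpl. lra.
 - destruct IHn as [IW IU].
   assert (IU1 : nrm d (Uf d nu m eps p F G (S n)) <= 1 - (1/2) ^ S n).
   { rewrite Uf_S, nrm_app. simpl in *. lra. }
   split; auto. rewrite Wf_S, nrm_Sym, nrm_scal, Rabs_Ropp.
   set (W := Wf d nu m eps p F G n). set (U1 := Uf d nu m eps p F G (S n)). set (U0 := Uf d nu m eps p F G n).
   fold W U0 U1 in IW, IU, IU1.
   assert (h1 : 0 < (1/2) ^ n) by (apply pow_lt; lra).
   assert (HQ : nrm d (Qf U1 U0 p) <= INR p) by (apply nrm_Qf; simpl in *; lra).
   pose proof (nrm_Linv d nu m (mul F (mul W (Qf U1 U0 p))) gam Hg Hnr).
   pose proof (nrm_mul d F (mul W (Qf U1 U0 p))). pose proof (nrm_mul d W (Qf U1 U0 p)).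
   pose proof (nrm_nonneg d F). pose proof (nrm_nonneg d W). pose proof (nrm_nonneg d (Qf U1 U0 p)).
   pose proof (Rabs_pos eps).
   assert (nrm d (mul F (mul W (Qf U1 U0 p))) <= nrm d F * ((1/2)^(S n) * INR p)).
   { eapply Rle_trans. apply H0. apply Rmult_le_compat_l; auto. eapply Rle_trans. apply H1.
     apply Rmult_le_compat; auto. }
   apply Rle_trans with (Rabs eps * (nrm d F * ((1/2)^(S n) * INR p) / gam)).
   apply Rmult_le_compat_l; auto. eapply Rle_trans. apply H. unfold Rdiv. apply Rmult_le_compat_r.
   left; apply Rinv_0_lt_compat; auto. auto.
   replace (Rabs eps * (nrm d F * ((1/2)^(S n) * INR p) / gam)) with
     ((Rabs eps * nrm d F * INR p / gam) * (1/2)^(S n)) by (field; lra).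
   change ((1/2)^(S (S n))) with ((1/2) * (1/2)^(S n)).
   apply Rmult_le_compat_r; auto. left; apply pow_lt; lra. Qed.


Lemma is_series_lim a l : is_series a l -> is_lim_seq (sum_n a) l.
Proof. intros H. exact H. Qed.

Lemma ex_series_le_R (a b : nat -> R) : (forall n, Rabs (a n) <= b n) -> ex_series b -> ex_series a.
Proof. intros H Hb. apply (ex_series_le a b); auto. Qed.

Lemma ex_series_minus_R (a b : nat -> R) : ex_series a -> ex_series b -> ex_series (fun n => a n - b n).
Proof. intros Ha Hb. exact (ex_series_minus a b Ha Hb). Qed.
Lemma ex_series_plus_R (a b : nat -> R) : ex_series a -> ex_series b -> ex_series (fun n => a n + b n).
Proof. intros Ha Hb. exact (ex_series_plus a b Ha Hb). Qed.
Lemma ex_series_scal_l_R (c : R) (a : nat -> R) : ex_series a -> ex_series (fun n => c * a n).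
Proof. intros Ha. exact (ex_series_scal_l c a Ha). Qed.

Lemma mvt_bound f f' h B : (forall t, is_derive f t (f' t)) ->
  (forall t, Rabs t <= Rabs h -> Rabs (f' t) <= B) -> Rabs (f h - f 0) <= B * Rabs h.
Proof. intros Hd Hb. assert (HB : 0 <= B) by (eapply Rle_trans; [apply Rabs_pos| apply (Hb 0)]; rewrite Rabs_R0; apply Rabs_pos).
 destruct (Rtotal_order h 0) as [Hn|[He|Hp]].
 - destruct (MVT_cor2 f f' h 0 Hn) as [c [Hc1 Hc2]]. intros c _; apply is_derive_Reals, Hd.
   rewrite <- Rabs_Ropp. replace (- (f h - f 0)) with (f 0 - f h) by ring. rewrite Hc1, Rabs_mult.
   replace (0 - h) with (- h) by ring. rewrite Rabs_Ropp.
   apply Rmult_le_compat_r. apply Rabs_pos. apply Hb. rewrite Rabs_left by lra. rewrite Rabs_left1 by lra. lra.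
 - subst. replace (f 0 - f 0) with 0 by ring. rewrite !Rabs_R0; lra.
 - destruct (MVT_cor2 f f' 0 h Hp) as [c [Hc1 Hc2]]. intros c _; apply is_derive_Reals, Hd.
   rewrite Hc1, Rabs_mult. replace (h - 0) with h by ring.
   apply Rmult_le_compat_r. apply Rabs_pos. apply Hb. rewrite !Rabs_right; lra. Qed.

Lemma taylor2 f f1 f2 M h : (forall t, is_derive f t (f1 t)) -> (forall t, is_derive f1 t (f2 t)) ->
  (forall t, Rabs (f2 t) <= M) -> Rabs (f h - f 0 - h * f1 0) <= M * (h * h).
Proof. intros H1 H2 H3.
 pose proof (mvt_bound (fun t => f t - t * f1 0) (fun t => f1 t - f1 0) h (M * Rabs h)) as K.
 assert (E : f h - f 0 - h * f1 0 = (f h - h * f1 0) - (f 0 - 0 * f1 0)) by ring. rewrite E.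
 replace (M * (h * h)) with (M * Rabs h * Rabs h). apply K.
 - intros t. apply is_derive_Reals.
   change (fun t0 : R_AbsRing => f t0 - t0 * f1 0) with (f - (id * fct_cte (f1 0)))%F.
   replace (f1 t - f1 0) with (f1 t - (1 * fct_cte (f1 0) t + id t * 0)) by (unfold fct_cte, id; ring).
   apply derivable_pt_lim_minus. apply is_derive_Reals, H1.
   apply derivable_pt_lim_mult. apply derivable_pt_lim_id. apply derivable_pt_lim_const.
 - intros t Ht. pose proof (mvt_bound f1 f2 t M H2 (fun s _ => H3 s)).
   eapply Rle_trans. apply H. apply Rmult_le_compat_l; auto.
   eapply Rle_trans; [apply Rabs_pos| apply (H3 0)].
 - rewrite Rmult_assoc, <- Rabs_mult. rewrite Rabs_right. auto. apply Rle_ge, Rle_0_sqr. Qed.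

Lemma series_derive (g g1 g2 : nat -> R -> R) (M : nat -> R) :
  (forall j t, is_derive (g j) t (g1 j t)) -> (forall j t, is_derive (g1 j) t (g2 j t)) ->
  (forall j t, Rabs (g2 j t) <= M j) -> ex_series M ->
  (forall t, ex_series (fun j => g j t)) -> ex_series (fun j => g1 j 0) ->
  is_derive (fun t => Series (fun j => g j t)) 0 (Series (fun j => g1 j 0)).
Proof. intros Hd1 Hd2 HM Hs Hg Hg1. apply is_derive_Reals. intros e He.
 assert (HM0 : forall j, 0 <= M j) by (intros j; eapply Rle_trans; [apply Rabs_pos|apply (HM j 0)]).
 set (S := Series M). assert (HS : 0 <= S).
 { unfold S. replace 0 with (Series (fun j => 0 * M j)). apply Series_le; auto. intros n; split; [lra|]. rewrite Rmult_0_l; apply HM0.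
   rewrite Series_scal_l; ring. }
 assert (Hd : 0 < e / (S + 1)) by (apply Rdiv_lt_0_compat; lra).
 exists (mkposreal _ Hd). intros h Hh0 Hh. simpl in Hh.
 assert (Ex : ex_series (fun j => g j (0 + h) - g j 0 - h * g1 j 0)).
 { apply (ex_series_le_R _ (fun j => M j * (h * h))).
   intros j. replace (0 + h) with h by ring.
   apply (taylor2 (g j) (g1 j) (g2 j)); auto. apply ex_series_scal_r; auto. }
 assert (Eq : (Series (fun j => g j (0 + h)) - Series (fun j => g j 0)) / h - Series (fun j => g1 j 0)
   = Series (fun j => g j (0 + h) - g j 0 - h * g1 j 0) / h).
 { rewrite Series_minus, Series_minus; auto. rewrite Series_scal_l. field; auto.
   apply ex_series_minus_R; auto. apply (ex_series_scal_l_R h); auto. }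
 rewrite Eq. unfold Rdiv. rewrite Rabs_mult, Rabs_inv.
 assert (Hb : Rabs (Series (fun j => g j (0 + h) - g j 0 - h * g1 j 0)) <= S * (h * h)).
 { eapply Rle_trans. apply Series_Rabs.
   apply (ex_series_le_R _ (fun j => M j * (h * h))). intros j. rewrite Rabs_Rabsolu. replace (0 + h) with h by ring.
   apply (taylor2 (g j) (g1 j) (g2 j)); auto. apply ex_series_scal_r; auto.
   unfold S. rewrite <- Series_scal_r. apply Series_le. intros j; split. apply Rabs_pos.
   replace (0 + h) with h by ring. apply (taylor2 (g j) (g1 j) (g2 j)); auto. apply ex_series_scal_r; auto. }
 assert (Hh1 : 0 < Rabs h) by (apply Rabs_pos_lt; auto).
 apply Rle_lt_trans with (S * (h * h) * / Rabs h).
 apply Rmult_le_compat_r; auto. left; apply Rinv_0_lt_compat; auto.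
 replace (S * (h * h) * / Rabs h) with (S * Rabs h).
 2:{ rewrite <- (Rabs_right (h*h)) by (apply Rle_ge, Rle_0_sqr). rewrite Rabs_mult. field. lra. }
 apply Rle_lt_trans with (S * (e / (S + 1))). apply Rmult_le_compat_l; lra.
 apply Rlt_le_trans with ((S + 1) * (e / (S + 1))). apply Rmult_lt_compat_r; lra.
 right; field; lra. Qed.


Lemma ex_geom c : ex_series (fun j => c * (1/2) ^ S j).
Proof. apply ex_series_scal_l_R. apply (ex_series_ext (fun j => (1/2) * (1/2) ^ j)). intros; reflexivity.
 apply ex_series_scal_l_R, ex_series_geom. rewrite Rabs_right; lra. Qed.
Lemma Series_geom2 c : Series (fun j => c * (1/2) ^ S j) = c.
Proof. rewrite Series_scal_l. rewrite (Series_ext _ (fun j => (1/2) * (1/2) ^ j)) by (intros; reflexivity).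
 rewrite Series_scal_l, Series_geom. field. rewrite Rabs_right; lra. Qed.

Lemma Series_sum_upto n (c : nat -> R) (b : nat -> nat -> R) :
  (forall i, (i < n)%nat -> ex_series (b i)) ->
  ex_series (fun j => sum_upto n (fun i => c i * b i j)) /\
  Series (fun j => sum_upto n (fun i => c i * b i j)) = sum_upto n (fun i => c i * Series (b i)).
Proof. induction n; intros H; simpl.
 - split. apply (ex_series_le_R _ (fun j => 0 * (1/2) ^ S j)). intros; rewrite Rabs_R0; lra.
   apply ex_geom.
   rewrite (Series_ext _ (fun j => 0 * (1/2) ^ S j)). apply Series_geom2. intros; ring.
 - destruct IHn as [H1 H2]. intros; apply H; lia.
   split. apply ex_series_plus_R; auto. apply ex_series_scal_l_R; apply H; lia.
   rewrite Series_plus, H2, Series_scal_l; auto. apply ex_series_scal_l_R; apply H; lia. Qed.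

Lemma sum_n_Lop d nu m eps p F G x n :
  sum_n (fun j => eR d (Lop d nu m (Wf d nu m eps p F G j)) x) n = eR d (Lop d nu m (Uf d nu m eps p F G (S n))) x.
Proof. induction n. rewrite sum_O, Uf_S, Uf_0. reflexivity.
 rewrite sum_Sn, IHn, (Uf_S _ _ _ _ _ _ _ (S n)), Lop_app, eR_app. reflexivity. Qed.

Lemma solution (d p : nat) (m eps gam : R) (nu : pt) (lf lg : list ((nat -> Z) * R * R)) :
  (1 <= p)%nat -> 0 < gam -> (forall k, gam <= Rabs (lam d nu k - m)) ->
  Rabs eps * nrm d (cv lg) / gam <= 1/2 -> Rabs eps * nrm d (cv lf) * INR p / gam <= 1/2 ->
  exists u, torus_fun d u /\ real_analytic d u /\
    solves d nu m eps (trig_poly d lf) (trig_poly d lg) p u.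
Proof. intros Hp Hg Hnr HG HF.
 set (F := cv lf). set (G := cv lg). set (W := fun j => Wf d nu m eps p F G j).
 assert (HW : forall j, nrm d (W j) <= (1/2) ^ S j).
 { intros j. apply (nrm_iter d nu m eps p F G gam); auto. }
 assert (Hb : forall l y j, Rabs (eR d (Dl d l (W j)) y) <= INR (fact (length l)) * (1/2) ^ S j).
 { intros l y j. eapply Rle_trans. apply abs_eR_Dl. apply Rmult_le_compat_l. apply pos_INR. auto. }
 assert (Hex : forall l y, ex_series (fun j => eR d (Dl d l (W j)) y)).
 { intros l y. apply (ex_series_le_R _ _ (Hb l y)). apply ex_geom. }
 set (Du := fun l y => Series (fun j => eR d (Dl d l (W j)) y)).
 assert (Hpf : partial_family d (Du nil) Du).
 { split. intros; reflexivity.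
   intros l i x Hi. apply is_derive_Reals.
   replace (Du (i :: l) x) with (Series (fun j => eR d (Dl d (i :: l) (W j)) (shift x i 0))).
   2:{ apply Series_ext. intros j. apply eR_ext. intros q _. unfold shift. destruct (Nat.eqb q i); ring. }
   apply (series_derive (fun j t => eR d (Dl d l (W j)) (shift x i t))
            (fun j t => eR d (Dl d (i :: l) (W j)) (shift x i t))
            (fun j t => eR d (Dl d (i :: i :: l) (W j)) (shift x i t))
            (fun j => INR (fact (length (i :: i :: l))) * (1/2) ^ S j)).
   - intros j t. apply (is_derive_eR d x i (Dl d l (W j)) t Hi).
   - intros j t. apply (is_derive_eR d x i (Dl d (i :: l) (W j)) t Hi).
   - intros j t. apply Hb.
   - apply ex_geom.
   - intros t. apply Hex.
   - apply Hex. }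
 exists (Du nil). split; [|split].
 - split.
   + intros x y Hxy. unfold Du. apply Series_ext. intros j. apply eR_ext; auto.
   + intros x i Hi. unfold Du. apply Series_ext. intros j. apply eR_per; auto.
 - exists Du. split; auto. intros x0. exists 1, 1, 1. split; [lra|split;[lra|split;[lra|]]].
   intros l x _ _. rewrite pow1. unfold Rdiv. rewrite Rinv_1, Rmult_1_r, Rmult_1_l.
   unfold Du. eapply Rle_trans. apply Series_Rabs.
   apply (ex_series_le_R _ _ (fun j => Rle_trans _ _ _ (Req_le _ _ (Rabs_Rabsolu _)) (Hb l x j))). apply ex_geom.
   rewrite <- (Series_geom2 (INR (fact (length l)))). apply Series_le.
   intros j; split. apply Rabs_pos. apply Hb. apply ex_geom.
 - exists Du. split; auto. intros x.
   assert (Hnz : forall k, lam d nu k - m <> 0).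
   { intros k E. specialize (Hnr k). rewrite E, Rabs_R0 in Hnr. lra. }
   set (a := fun j => eR d (Lop d nu m (W j)) x).
   assert (Ha : forall j, a j = (-1) * sum_upto d (fun i => nu i ^ 2 * eR d (Dl d (i :: i :: nil) (W j)) x)
                                  + (- m) * eR d (Dl d nil (W j)) x).
   { intros j. unfold a. rewrite eR_Lop. simpl. ring. }
   destruct (Series_sum_upto d (fun i => nu i ^ 2) (fun i j => eR d (Dl d (i :: i :: nil) (W j)) x))
     as [Hs1 Hs2]. intros; apply Hex.
   assert (Hexa : ex_series a).
   { apply (ex_series_ext _ _ (fun j => eq_sym (Ha j))). apply ex_series_plus_R; apply ex_series_scal_l_R; auto. }
   assert (HSa : Series a = - sum_upto d (fun i => nu i ^ 2 * Du (i :: i :: nil) x) - m * Du nil x).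
   { rewrite (Series_ext _ _ Ha). rewrite Series_plus, !Series_scal_l. rewrite Hs2. unfold Du. ring.
     apply ex_series_scal_l_R; auto. apply ex_series_scal_l_R; auto. }
   assert (L1 : is_lim_seq (sum_n a) (Series a)) by (apply is_series_lim, Series_correct; auto).
   assert (L2 : is_lim_seq (fun n => eR d (Uf d nu m eps p F G n) x) (Du nil x)).
   { apply is_lim_seq_incr_1. apply (is_lim_seq_ext (sum_n (fun j => eR d (Dl d nil (W j)) x))).
     intros n. rewrite eR_Uf. reflexivity. apply is_series_lim, Series_correct. apply Hex. }
   set (phi := fun y => - eps * (eR d G x + eR d F x * y ^ p)).
   assert (L3 : is_lim_seq (fun n => phi (eR d (Uf d nu m eps p F G n) x)) (phi (Du nil x))).
   { apply is_lim_seq_continuous; auto. unfold phi. reg. }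
   assert (E : Series a = phi (Du nil x)).
   { assert (Finite (Series a) = Finite (phi (Du nil x))); [|congruence].
     rewrite <- (is_lim_seq_unique _ _ L1), <- (is_lim_seq_unique _ _ L3).
     apply Lim_seq_ext. intros n. unfold a, W. rewrite sum_n_Lop. unfold phi. apply eR_Lop_Uf; auto. }
   rewrite HSa in E. unfold phi in E. rewrite <- (eR_cv d lf x), <- (eR_cv d lg x).
   change (cv lf) with F. change (cv lg) with G. lra. Qed.


Lemma prod_upto_ext n F G : (forall i, (i < n)%nat -> F i = G i) -> prod_upto n F = prod_upto n G.
Proof. induction n; intros H; simpl; auto. rewrite IHn, H; auto. Qed.
Lemma prod_upto_mult n F G : prod_upto n (fun i => F i * G i) = prod_upto n F * prod_upto n G.
Proof. induction n; simpl; [ring|rewrite IHn; ring]. Qed.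
Lemma prod_upto_nonneg n F : (forall i, (i < n)%nat -> 0 <= F i) -> 0 <= prod_upto n F.
Proof. induction n; intros H; simpl. lra. apply Rmult_le_pos; auto. Qed.
Lemma prod_upto_1 n : prod_upto n (fun _ => 1) = 1.
Proof. induction n; simpl; auto. rewrite IHn; ring. Qed.
Lemma prod_upto_ind n i0 v : (i0 < n)%nat -> prod_upto n (fun i => if Nat.eqb i i0 then v else 1) = v.
Proof. induction n; intros H; [lia|]. simpl. destruct (Nat.eqb_spec n i0).
 - subst. rewrite (prod_upto_ext _ _ (fun _ => 1)). rewrite prod_upto_1; ring.
   intros i Hi. destruct (Nat.eqb_spec i i0); [lia|auto].
 - rewrite IHn by lia. ring. Qed.

Fixpoint prod_nat (n : nat) (r : nat -> nat) : nat := match n with O => 1%nat | S n => (prod_nat n r * r n)%nat end.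
Lemma INR_prod_nat n r : INR (prod_nat n r) = prod_upto n (fun i => INR (r i)).
Proof. induction n; simpl; auto. rewrite mult_INR, IHn. auto. Qed.

Fixpoint cells (r : nat -> nat) (n : nat) : list (nat -> nat) :=
  match n with
  | O => (fun _ => 0%nat) :: nil
  | S n => flat_map (fun c => map (fun j => fun i => if Nat.eqb i n then j else c i) (seq 0 (r n))) (cells r n)
  end.
Lemma length_flat_map_const {A B} (f : A -> list B) l q : (forall x, length (f x) = q) ->
  length (flat_map f l) = (length l * q)%nat.
Proof. intros H. induction l; simpl; auto. rewrite length_app, H, IHl. lia. Qed.
Lemma length_cells r n : length (cells r n) = prod_nat n r.
Proof. induction n; simpl; auto. rewrite (length_flat_map_const _ _ (r n)). rewrite IHn; auto.
 intros; rewrite length_map, length_seq; auto. Qed.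
Lemma in_cells r n c : (forall i, (i < n)%nat -> (c i < r i)%nat) ->
  exists c', In c' (cells r n) /\ forall i, (i < n)%nat -> c' i = c i.
Proof. induction n; intros H. exists (fun _ => 0%nat). split; [left; auto| intros; lia].
 destruct IHn as [c' [H1 H2]]. intros; apply H; lia.
 exists (fun i => if Nat.eqb i n then c n else c' i). split.
 - simpl. apply in_flat_map. exists c'. split; auto. apply in_map_iff. exists (c n). split; auto.
   apply in_seq. specialize (H n). lia.
 - intros i Hi. destruct (Nat.eqb_spec i n). subst; auto. apply H2; lia. Qed.

Lemma floor_cell N t : 0 <= t <= INR (S N) -> exists c, (c < S N)%nat /\ INR c <= t <= INR c + 1.
Proof. induction N; intros H. exists 0%nat. simpl in *. split; [lia|lra].
 destruct (Rle_dec t (INR (S N))) as [Ht|Ht].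
 - destruct IHN as [c [H1 H2]]. lra. exists c; split; auto; lia.
 - exists (S N). split; [lia|]. rewrite (S_INR (S N)) in H. lra. Qed.

Lemma sum_upto_split n F i0 : (i0 < n)%nat ->
  sum_upto n F = F i0 + sum_upto n (fun i => if Nat.eqb i i0 then 0 else F i).
Proof. induction n; intros H; [lia|]. simpl. destruct (Nat.eqb_spec n i0).
 - subst. rewrite (sum_upto_ext _ (fun i => if Nat.eqb i i0 then 0 else F i) F). ring.
   intros i Hi. destruct (Nat.eqb_spec i i0); [lia|auto].
 - rewrite IHn by lia. ring. Qed.
Lemma sum_upto_abs_le n F G : (forall i, (i < n)%nat -> Rabs (F i) <= G i) -> Rabs (sum_upto n F) <= sum_upto n G.
Proof. induction n; intros H; simpl. rewrite Rabs_R0; lra.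
 eapply Rle_trans. apply Rabs_triang. apply Rplus_le_compat; auto. Qed.
Lemma sum_upto_minus n F G : sum_upto n (fun i => F i - G i) = sum_upto n F - sum_upto n G.
Proof. induction n; simpl; [ring|rewrite IHn; ring]. Qed.

Lemma IZR_sq_ge1 z : z <> 0%Z -> 1 <= IZR z ^ 2.
Proof. intros H. replace (IZR z ^ 2) with (IZR (z * z)) by (rewrite mult_IZR; ring). apply IZR_le. nia. Qed.

Definition Ssq d (k : nat -> Z) := sum_upto d (fun i => IZR (k i) ^ 2).

Lemma key_est d k m gam i0 h nu nus : (i0 < d)%nat -> k i0 <> 0%Z -> 0 <= h ->
  in_cube d nu -> in_cube d nus ->
  (forall i, (i < d)%nat -> i <> i0 -> Rabs (nu i - nus i) <= h) ->
  Rabs (lam d nu k - m) < gam -> Rabs (lam d nus k - m) < gam ->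
  Rabs (nu i0 - nus i0) <= gam + 2 * h * Ssq d k.
Proof. intros Hi0 Hk Hh Hc1 Hc2 Hcl Hb1 Hb2.
 set (Di := fun i => IZR (k i) ^ 2 * (nu i ^ 2 - nus i ^ 2)).
 assert (E : lam d nu k - lam d nus k = sum_upto d Di).
 { unfold lam. rewrite <- sum_upto_minus. apply sum_upto_ext. intros; unfold Di; ring. }
 rewrite (sum_upto_split d Di i0 Hi0) in E.
 assert (Hr : Rabs (sum_upto d (fun i => if Nat.eqb i i0 then 0 else Di i)) <= 4 * h * Ssq d k).
 { unfold Ssq. rewrite <- sum_upto_scal. apply sum_upto_abs_le. intros i Hi.
   pose proof (pow2_ge_0 (IZR (k i))).
   destruct (Nat.eqb_spec i i0). rewrite Rabs_R0. nra.
   unfold Di. rewrite Rabs_mult. rewrite (Rabs_right (IZR (k i) ^ 2)) by lra.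
   replace (nu i ^ 2 - nus i ^ 2) with ((nu i - nus i) * (nu i + nus i)) by ring.
   rewrite Rabs_mult. specialize (Hc1 i Hi). specialize (Hc2 i Hi). specialize (Hcl i Hi n).
   rewrite (Rabs_right (nu i + nus i)) by lra.
   assert (Rabs (nu i - nus i) * (nu i + nus i) <= h * 4).
   { apply Rmult_le_compat; try lra. apply Rabs_pos. }
   nra. }
 assert (HD : Rabs (Di i0) < 2 * gam + 4 * h * Ssq d k).
 { replace (Di i0) with ((lam d nu k - m) - (lam d nus k - m) - sum_upto d (fun i => if Nat.eqb i i0 then 0 else Di i)) by lra.
   unfold Rminus at 1. eapply Rle_lt_trans. apply Rabs_triang. rewrite Rabs_Ropp.
   eapply Rle_lt_trans. apply Rplus_le_compat_r. apply Rabs_triang. rewrite Rabs_Ropp. lra. }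
 unfold Di in HD. replace (nu i0 ^ 2 - nus i0 ^ 2) with ((nu i0 - nus i0) * (nu i0 + nus i0)) in HD by ring.
 rewrite !Rabs_mult in HD. pose proof (IZR_sq_ge1 _ Hk).
 rewrite (Rabs_right (IZR (k i0) ^ 2)) in HD by lra.
 specialize (Hc1 i0 Hi0). specialize (Hc2 i0 Hi0).
 rewrite (Rabs_right (nu i0 + nus i0)) in HD by lra.
 pose proof (Rabs_pos (nu i0 - nus i0)).
 assert (X1 : Rabs (nu i0 - nus i0) * 2 <= Rabs (nu i0 - nus i0) * (nu i0 + nus i0)) by (apply Rmult_le_compat_l; lra).
 assert (X2 : 0 <= Rabs (nu i0 - nus i0) * (nu i0 + nus i0)) by lra.
 assert (Rabs (nu i0 - nus i0) * 2 <= IZR (k i0) ^ 2 * (Rabs (nu i0 - nus i0) * (nu i0 + nus i0))) by nra.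
 lra. Qed.

Lemma nat_above x : exists n : nat, x < INR n.
Proof. destruct (archimed x) as [H1 H2]. exists (Z.to_nat (up x)).
 destruct (Z_le_gt_dec (up x) 0) as [H|H].
 - replace (Z.to_nat (up x)) with 0%nat by lia. simpl. apply IZR_le in H. lra.
 - rewrite INR_IZR_INZ, Z2Nat.id by lia. auto. Qed.

Lemma finite_choice (P : nat -> nat -> Prop) n : (forall i, (i < n)%nat -> exists x, P i x) ->
  exists f : nat -> nat, forall i, (i < n)%nat -> P i (f i).
Proof. induction n; intros H. exists (fun _ => 0%nat); intros; lia.
 destruct IHn as [f Hf]. intros; apply H; lia. destruct (H n) as [x Hx]. lia.
 exists (fun i => if Nat.eqb i n then x else f i). intros i Hi.
 destruct (Nat.eqb_spec i n). subst; auto. apply Hf; lia. Qed.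

Definition bvol d (bx : pt * pt) := box_vol d (fst bx) (snd bx).
Definition okbox d (bx : pt * pt) := forall i, (i < d)%nat -> fst bx i <= snd bx i.
Definition inbox d (bx : pt * pt) (nu : pt) := forall i, (i < d)%nat -> fst bx i <= nu i <= snd bx i.
Definition badk d m gam k (nu : pt) := in_cube d nu /\ Rabs (lam d nu k - m) < gam.

Lemma cover_k d m gam k i0 : (i0 < d)%nat -> k i0 <> 0%Z -> 0 < gam ->
  exists Lb, (forall bx, In bx Lb -> okbox d bx) /\
    (forall nu, badk d m gam k nu -> exists bx, In bx Lb /\ inbox d bx nu) /\
    lsum (map (bvol d) Lb) <= 3 * gam.
Proof. intros Hi0 Hk Hg.
 set (SS := Ssq d k). assert (HS : 0 <= SS) by (apply sum_upto_nonneg; intros; apply pow2_ge_0).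
 destruct (nat_above (4 * SS / gam)) as [N' HN'].
 set (NN := S N'). assert (HNN : 0 < INR NN) by (apply lt_0_INR; unfold NN; lia).
 set (h := / INR NN). assert (Hh : 0 < h) by (apply Rinv_0_lt_compat; auto).
 set (r := fun i => if Nat.eqb i i0 then 1%nat else NN).
 set (lo := fun (c : nat -> nat) i => 1 + INR (c i) * h).
 set (hi := fun (c : nat -> nat) i => 1 + (INR (c i) + 1) * h).
 set (w := gam + 2 * h * SS). assert (Hw : 0 <= w) by (unfold w; nra).
 set (V := prod_upto d (fun i => if Nat.eqb i i0 then 2 * w else h)).
 assert (HV : 0 <= V). { apply prod_upto_nonneg. intros i _. destruct (Nat.eqb i i0); lra. }
 set (cellP := fun (c : nat -> nat) (nu : pt) => forall i, (i < d)%nat -> i <> i0 -> lo c i <= nu i <= hi c i).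
 assert (Hcl : forall cl, exists Lb, (forall bx, In bx Lb -> okbox d bx) /\
    (forall c nu, In c cl -> badk d m gam k nu -> cellP c nu -> exists bx, In bx Lb /\ inbox d bx nu) /\
    lsum (map (bvol d) Lb) <= INR (length cl) * V).
 { induction cl as [|c cl IH].
   - exists nil. split; [intros bx []|split; [intros c nu []|simpl; lra]].
   - destruct IH as [Lb [H1 [H2 H3]]].
     destruct (classic (exists nus, badk d m gam k nus /\ cellP c nus)) as [[nus [Hb Hc]]|Hn].
     + set (bx := (fun i => if Nat.eqb i i0 then nus i0 - w else lo c i,
                   fun i => if Nat.eqb i i0 then nus i0 + w else hi c i)).
       exists (bx :: Lb). split; [|split].
       * intros b [<-|Hb']; auto. intros i Hi. simpl. destruct (Nat.eqb i i0). lra.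
         unfold lo, hi. lra.
       * intros c' nu [<-|Hin] Hbn Hcn.
         -- exists bx. split; [left; auto|]. intros i Hi. simpl. destruct (Nat.eqb_spec i i0).
            ++ subst i. assert (Rabs (nu i0 - nus i0) <= w).
               { apply (key_est d k m gam i0 h nu nus); auto. lra. apply Hbn. apply Hb.
                 intros j Hj Hji. specialize (Hcn j Hj Hji). specialize (Hc j Hj Hji).
                 unfold lo, hi in *. apply Rabs_le. lra. apply Hbn. apply Hb. }
               apply Rabs_le_between' in H. lra.
            ++ apply Hcn; auto.
         -- destruct (H2 c' nu Hin Hbn Hcn) as [b [Hb1 Hb2]]. exists b; split; auto. right; auto.
       * change (length (c::cl)) with (S (length cl)).
         change (lsum (map (bvol d) (bx::Lb))) with (bvol d bx + lsum (map (bvol d) Lb)).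
         rewrite S_INR.
         assert (bvol d bx = V).
         { unfold bvol, box_vol, V. apply prod_upto_ext. intros i Hi. simpl. destruct (Nat.eqb i i0). lra.
           unfold lo, hi. ring. }
         lra.
     + exists Lb. split; auto. split.
       * intros c' nu [<-|Hin] Hbn Hcn. exfalso; apply Hn; exists nu; auto. apply (H2 c' nu Hin Hbn Hcn).
       * simpl length. rewrite S_INR. lra. }
 destruct (Hcl (cells r d)) as [Lb [H1 [H2 H3]]].
 exists Lb. split; auto. split.
 - intros nu Hb.
   destruct (finite_choice (fun i x => (x < r i)%nat /\ (i <> i0 -> lo (fun _ => x) i <= nu i <= hi (fun _ => x) i)) d) as [c Hc].
   { intros i Hi. unfold r. destruct (Nat.eqb_spec i i0).
     - exists 0%nat. split; [lia|]. intros; contradiction.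
     - destruct Hb as [Hcube _]. specialize (Hcube i Hi).
       destruct (floor_cell N' ((nu i - 1) * INR NN)) as [x [Hx1 Hx2]].
       { split. apply Rmult_le_pos; lra. change (INR (S N')) with (INR NN).
         replace (INR NN) with (1 * INR NN) at 2 by ring. apply Rmult_le_compat_r; lra. }
       exists x. split; auto. intros _. unfold lo, hi. unfold h.
       split.
       + assert (INR x * / INR NN <= nu i - 1).
         { apply (Rmult_le_reg_r (INR NN)); auto. rewrite Rmult_assoc, Rinv_l by lra. lra. }
         lra.
       + assert (nu i - 1 <= (INR x + 1) * / INR NN).
         { apply (Rmult_le_reg_r (INR NN)); auto. rewrite Rmult_assoc, Rinv_l by lra. lra. }
         lra. }
   destruct (in_cells r d c) as [c' [Hc'1 Hc'2]]. intros i Hi; apply Hc; auto.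
   apply (H2 c' nu Hc'1 Hb). intros i Hi Hii. unfold lo, hi. rewrite Hc'2 by auto.
   destruct (Hc i Hi) as [_ Hci]. specialize (Hci Hii). unfold lo, hi in Hci. auto.
 - eapply Rle_trans. apply H3. rewrite length_cells, INR_prod_nat. unfold V.
   rewrite <- prod_upto_mult.
   rewrite (prod_upto_ext _ _ (fun i => if Nat.eqb i i0 then 2 * w else 1)).
   rewrite prod_upto_ind by auto. unfold w.
   assert (4 * SS * h <= gam).
   { unfold h. apply (Rmult_le_reg_r (INR NN)); auto. rewrite Rmult_assoc, Rinv_l by lra.
     assert (INR N' <= INR NN) by (apply le_INR; unfold NN; lia).
     assert (4 * SS / gam * gam = 4 * SS) by (field; lra).
     nra. }
   lra.
   intros i Hi. unfold r. destruct (Nat.eqb i i0). simpl; ring. unfold h. field. lra. Qed.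


Lemma lam_ext d nu k k' : (forall i, (i < d)%nat -> k i = k' i) -> lam d nu k = lam d nu k'.
Proof. intros H. unfold lam. apply sum_upto_ext. intros i Hi; rewrite H; auto. Qed.

Lemma cover_list d m gam (KL : list (nat -> Z)) : 0 < gam -> gam <= m ->
  exists Lb, (forall bx, In bx Lb -> okbox d bx) /\
    (forall nu k, In k KL -> badk d m gam k nu -> exists bx, In bx Lb /\ inbox d bx nu) /\
    lsum (map (bvol d) Lb) <= INR (length KL) * (3 * gam).
Proof. intros Hg Hgm. induction KL as [|k KL IH].
 - exists nil. split; [intros bx []|split; [intros nu k []|simpl; lra]].
 - destruct IH as [Lb [H1 [H2 H3]]].
   change (length (k::KL)) with (S (length KL)). rewrite S_INR.
   destruct (classic (exists i0, (i0 < d)%nat /\ k i0 <> 0%Z)) as [[i0 [Hi0 Hk]]|Hn].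
   + destruct (cover_k d m gam k i0 Hi0 Hk Hg) as [Lk [K1 [K2 K3]]].
     exists (Lk ++ Lb). split; [|split].
     * intros bx Hbx. apply in_app_or in Hbx. destruct Hbx; auto.
     * intros nu k' [<-|Hin] Hb.
       -- destruct (K2 nu Hb) as [bx [B1 B2]]. exists bx. split; auto. apply in_or_app; left; auto.
       -- destruct (H2 nu k' Hin Hb) as [bx [B1 B2]]. exists bx. split; auto. apply in_or_app; right; auto.
     * rewrite map_app, lsum_app. lra.
   + exists Lb. split; auto. split.
     * intros nu k' [<-|Hin] Hb.
       -- exfalso. destruct Hb as [_ Hb]. rewrite (lam_ext d nu k (fun _ => 0%Z)) in Hb.
          unfold lam in Hb. rewrite (sum_upto_ext _ _ (fun _ => 0 * 0)) in Hb. rewrite sum_upto_scal in Hb.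
          rewrite Rmult_0_l, Rminus_0_l, Rabs_Ropp, Rabs_right in Hb by lra. lra.
          intros; simpl; ring.
          intros i Hi. destruct (Z.eq_dec (k i) 0); auto. exfalso; apply Hn; exists i; auto.
       -- apply (H2 nu k' Hin Hb).
     * lra. Qed.

Lemma lsum_nonneg l : (forall x, In x l -> 0 <= x) -> 0 <= lsum l.
Proof. induction l; intros H; simpl. lra. assert (0 <= a) by (apply H; left; auto).
 assert (0 <= lsum l) by (apply IHl; intros; apply H; right; auto). lra. Qed.

Lemma bvol_nonneg d bx : okbox d bx -> 0 <= bvol d bx.
Proof. intros H. unfold bvol, box_vol. apply prod_upto_nonneg. intros i Hi. specialize (H i Hi). lra. Qed.

Lemma sum_nth_le d (Lb : list (pt * pt)) z N : (forall bx, In bx Lb -> okbox d bx) -> bvol d z = 0 ->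
  sum_f_R0 (fun n => bvol d (nth n Lb z)) N <= lsum (map (bvol d) Lb).
Proof. revert N. induction Lb as [|b Lb IH]; intros N Hok Hz.
 - simpl. rewrite (sum_eq _ (fun _ => 0)). rewrite sum_cte. lra. intros i _. destruct i; auto.
 - assert (0 <= lsum (map (bvol d) Lb)).
   { apply lsum_nonneg. intros x Hx. apply in_map_iff in Hx. destruct Hx as [bx [<- Hbx]]. apply bvol_nonneg, Hok; right; auto. }
   change (lsum (map (bvol d) (b::Lb))) with (bvol d b + lsum (map (bvol d) Lb)).
   destruct N.
   + change (sum_f_R0 (fun n => bvol d (nth n (b :: Lb) z)) 0) with (bvol d b). lra.
   + rewrite decomp_sum by lia. change (nth 0 (b :: Lb) z) with b. rewrite <- pred_Sn.
     apply Rplus_le_compat_l.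
     apply (IH N); auto. intros; apply Hok; right; auto. Qed.

Lemma outer_from_list d S (Lb : list (pt * pt)) delta : (1 <= d)%nat ->
  (forall bx, In bx Lb -> okbox d bx) -> (forall nu, S nu -> exists bx, In bx Lb /\ inbox d bx nu) ->
  lsum (map (bvol d) Lb) <= delta -> outer_measure_le d S delta.
Proof. intros Hd Hok Hcov Hs eta Heta.
 set (z := ((fun _ : nat => 0), (fun _ : nat => 0)) : pt * pt).
 assert (Hz : bvol d z = 0). { unfold bvol, box_vol, z; simpl. destruct d; [lia|]. simpl. ring. }
 exists (fun n => fst (nth n Lb z)), (fun n => snd (nth n Lb z)). split; [|split].
 - intros n i Hi. destruct (Nat.lt_ge_cases n (length Lb)).
   apply Hok; auto. apply nth_In; auto. rewrite nth_overflow by auto. simpl; lra.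
 - intros nu Hnu. destruct (Hcov nu Hnu) as [bx [H1 H2]]. apply In_nth with (d := z) in H1.
   destruct H1 as [n [_ Hn]]. exists n. rewrite Hn. auto.
 - intros N. pose proof (sum_nth_le d Lb z N Hok Hz).
   apply Rle_trans with (lsum (map (bvol d) Lb)). exact H. lra. Qed.


Lemma eps_cond eps gam X Y : 0 < gam -> 0 <= X -> X <= Y -> 0 <= eps <= gam / (2 * (Y + 1)) ->
  Rabs eps * X / gam <= 1/2.
Proof. intros Hg HX HXY He. rewrite Rabs_right by lra.
 assert (HY : 0 < Y + 1) by lra.
 assert (eps * X <= gam / (2 * (Y + 1)) * X) by (apply Rmult_le_compat_r; lra).
 assert (gam / (2 * (Y + 1)) * X <= gam / 2).
 { unfold Rdiv. rewrite Rinv_mult. 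
   replace (gam * (/ 2 * / (Y + 1)) * X) with ((gam / 2) * (X / (Y + 1))) by (unfold Rdiv; ring).
   replace (gam * / 2) with ((gam / 2) * 1) by (unfold Rdiv; ring).
   apply Rmult_le_compat_l. lra. apply (Rmult_le_reg_r (Y + 1)); auto. unfold Rdiv. rewrite Rmult_assoc, Rinv_l by lra. lra. }
 apply (Rmult_le_reg_r gam); auto. unfold Rdiv. rewrite Rmult_assoc, Rinv_l by lra. lra. Qed.

Lemma abs_le_sq z : Rabs (IZR z) <= IZR z ^ 2.
Proof. replace (IZR z ^ 2) with (IZR (z * z)) by (rewrite mult_IZR; ring). rewrite <- abs_IZR. apply IZR_le. nia. Qed.

Theorem theorem1p1 (d p : nat) (m : R) (lf lg : list ((nat -> Z) * R * R)) :
  (1 <= d)%nat -> (2 <= p)%nat -> 0 < m ->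
  (exists x, trig_poly d lg x <> 0) ->
  forall delta, 0 < delta ->
  exists eps0, 0 < eps0 /\
  forall eps, 0 <= eps <= eps0 ->
  exists Omega : pt -> Prop,
    (forall nu, Omega nu -> in_cube d nu) /\
    outer_measure_le d (fun nu => in_cube d nu /\ ~ Omega nu) delta /\
    forall nu, Omega nu ->
      exists u : pt -> R,
        torus_fun d u /\ real_analytic d u /\
        solves d nu m eps (trig_poly d lf) (trig_poly d lg) p u.
Proof.
 intros Hd Hp Hm _ delta Hdel.
 destruct (nat_above (m + 1)) as [K HK].
 set (r := fun _ : nat => (2 * K + 1)%nat).
 set (KL := map (fun c => fun i => (Z.of_nat (c i) - Z.of_nat K)%Z) (cells r d)).
 set (NK := INR (length KL)). assert (HNK : 0 <= NK) by apply pos_INR.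
 set (gam := Rmin m (Rmin 1 (delta / (3 * (NK + 1))))).
 assert (Hg0 : 0 < delta / (3 * (NK + 1))) by (apply Rdiv_lt_0_compat; lra).
 assert (Hg : 0 < gam). { unfold gam. apply Rmin_pos; auto. apply Rmin_pos; lra. }
 assert (Hgm : gam <= m) by apply Rmin_l.
 assert (Hg1 : gam <= 1) by (unfold gam; eapply Rle_trans; [apply Rmin_r|apply Rmin_l]).
 assert (Hgd : gam <= delta / (3 * (NK + 1))) by (unfold gam; eapply Rle_trans; [apply Rmin_r|apply Rmin_r]).
 set (Fs := nrm d (cv lf)). set (Gs := nrm d (cv lg)).
 assert (HFs : 0 <= Fs) by apply nrm_nonneg. assert (HGs : 0 <= Gs) by apply nrm_nonneg.
 assert (HP : 0 <= INR p) by apply pos_INR.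
 set (Y := Gs + Fs * INR p).
 assert (HY : 0 <= Y) by (unfold Y; nra).
 exists (gam / (2 * (Y + 1))). split. apply Rdiv_lt_0_compat; lra.
 intros eps Heps.
 set (Omega := fun nu => in_cube d nu /\ forall k, gam <= Rabs (lam d nu k - m)).
 exists Omega. split; [|split].
 - intros nu [H _]; auto.
 - destruct (cover_list d m gam KL Hg Hgm) as [Lb [H1 [H2 H3]]].
   apply (outer_from_list d _ Lb delta Hd H1).
   + intros nu [Hc Hno].
     assert (Hk : exists k, Rabs (lam d nu k - m) < gam).
     { apply NNPP. intros Hn. apply Hno. split; auto. intros k. apply Rnot_lt_le. intros Hl. apply Hn. exists k; auto. }
     destruct Hk as [k Hk].
     assert (Hki : forall i, (i < d)%nat -> (Z.abs (k i) < Z.of_nat K)%Z).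
     { intros i Hi. apply lt_IZR. rewrite abs_IZR, <- INR_IZR_INZ.
       assert (Rabs (IZR (k i)) <= lam d nu k).
       { eapply Rle_trans. apply abs_le_sq.
         eapply Rle_trans; [|apply (sum_upto_single_le d (fun i => nu i ^ 2 * IZR (k i) ^ 2) i Hi)].
         - pose proof (Hc i Hi). pose proof (pow2_ge_0 (IZR (k i))).
           assert (1 <= nu i ^ 2) by nra. nra.
         - intros j Hj. apply Rmult_le_pos; apply pow2_ge_0. }
       apply Rabs_def2 in Hk. lra. }
     destruct (in_cells r d (fun i => Z.to_nat (k i + Z.of_nat K))) as [c' [Hc1 Hc2]].
     { intros i Hi. unfold r. specialize (Hki i Hi). lia. }
     set (k' := fun i => (Z.of_nat (c' i) - Z.of_nat K)%Z).
     assert (Hkk : forall i, (i < d)%nat -> k i = k' i).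
     { intros i Hi. unfold k'. rewrite Hc2 by auto. specialize (Hki i Hi). lia. }
     apply (H2 nu k'). unfold KL. apply in_map_iff. exists c'; auto.
     split; auto. rewrite <- (lam_ext d nu k k' Hkk). auto.
   + eapply Rle_trans. apply H3. fold NK.
     assert (NK * (3 * gam) <= NK * (3 * (delta / (3 * (NK + 1))))) by (apply Rmult_le_compat_l; lra).
     assert (NK * (3 * (delta / (3 * (NK + 1)))) = delta * (NK / (NK + 1))) by (field; lra).
     assert (NK / (NK + 1) <= 1). { apply (Rmult_le_reg_r (NK + 1)); [lra|]. unfold Rdiv. rewrite Rmult_assoc, Rinv_l by lra. lra. }
     assert (delta * (NK / (NK + 1)) <= delta * 1) by (apply Rmult_le_compat_l; lra). lra.
 - intros nu [Hc Hnr].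
   apply (solution d p m eps gam nu lf lg); auto. lia.
   + apply (eps_cond eps gam Gs Y); auto. unfold Y. nra.
   + rewrite Rmult_assoc. apply (eps_cond eps gam (Fs * INR p) Y); auto. nra. unfold Y. lra.
Qed.
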